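(* For every integer $k\ge0$ and every $x\in U_k$, $\{d_{U_k}(x,x'):x'\in U_k,\ x'\ne x\}=\{k-2j: j=0,1,\ldots,\lfloor\frac{k-1}{2}\rfloor\}$.
   Context: For metric spaces $X,Y$ and $a>0$, $X\overset{a}{\sqcup}Y$ is the disjoint union with the original metrics on each part and distance $a$ between points of different parts. The sequence $(U_k)_{k\ge0}$: $U_0$ is a one-point space, $U_1$ is a two-point space with distance $1$, and $U_k=U_{k-2}\overset{k}{\sqcup}U_{k-2}$ for $k>1$. (For $k=0$ the right-hand set is empty.) *)

(* Defs.v *)
From Stdlib Require Import Arith Bool.

(* Carrier of U_k.  U_0 = one point, U_1 = two points,
   U_{k+2} = U_k ⊔ U_k, the boolean tag recording which copy. *)
Fixpoint U (k : nat) : Type :=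
  match k with
  | 0 => unit
  | 1 => bool
  | S (S k') => (bool * U k')%type
  end.

Fixpoint Ud (k : nat) : U k -> U k -> nat :=
  match k return U k -> U k -> nat with
  | 0 => fun _ _ => 0
  | 1 => fun x y => if Bool.eqb x y then 0 else 1
  | S (S k') => fun x y =>
      if Bool.eqb (fst x) (fst y) then Ud k' (snd x) (snd y) else S (S k')
  end.

(* Main.v *)
Require Import Defs.
From Stdlib Require Import Arith Bool Lia.

Definition P (k : nat) : Prop := forall (x : U k) (d : nat),
  (exists x' : U k, x' <> x /\ Ud k x x' = d) <->
  (exists j : nat, 2 * j + 1 <= k /\ d = k - 2 * j).

Lemma P0 : P 0.
Proof.
  intros x d; split.
  - intros [x' [H _]]; destruct x, x'; congruence.
  - intros [j [H _]]; lia.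
Qed.

Lemma P1 : P 1.
Proof.
  intros x d; split.
  - intros [x' [H E]]; exists 0; split; [lia|].
    simpl in E; destruct x, x'; simpl in *; congruence.
  - intros [j [H E]]; exists (negb x); split.
    + destruct x; discriminate.
    + simpl. destruct x; simpl; lia.
Qed.

Lemma PSS k : P k -> P (S (S k)).
Proof.
  intros IH [b y] d; split.
  - intros [[b' y'] [H E]]; simpl in E.
    destruct (Bool.eqb b b') eqn:Eb.
    + apply eqb_prop in Eb; subst b'.
      assert (y' <> y) by congruence.
      destruct (proj1 (IH y d) (ex_intro _ y' (conj H0 E))) as [j [Hj Ed]].
      exists (S j); split; lia.
    + exists 0; split; lia.
  - intros [j [Hj Ed]]; destruct j as [|j].
    + exists (negb b, y); split.
      * destruct b; intro Hc; inversion Hc.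
      * simpl. destruct b; simpl; lia.
    + assert (A1 : 2 * j + 1 <= k) by lia.
      assert (A2 : d = k - 2 * j) by lia.
      destruct (proj2 (IH y d) (ex_intro _ j (conj A1 A2))) as [y' [H E]].
      exists (b, y'); split.
      * intro Hc; inversion Hc; auto.
      * simpl. rewrite eqb_reflx; exact E.
Qed.

Lemma Pall k : P k /\ P (S k).
Proof.
  induction k as [|k [IH1 IH2]].
  - split; [apply P0 | apply P1].
  - split; [exact IH2 | apply PSS; exact IH1].
Qed.

Theorem claim6 (k : nat) (x : U k) (d : nat) :
  (exists x' : U k, x' <> x /\ Ud k x x' = d) <->
  (exists j : nat, 2 * j + 1 <= k /\ d = k - 2 * j).
Proof.
  exact (proj1 (Pall k) x d).
Qed.
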